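(* Let $\lambda,n_c,g_+,g_->0$ with $n_c<1$, let $0<\bar c<c_B/2$, set $\alpha=\sqrt{g_-/(g_++g_-)}$, and let $R_{vitro}>0$ be the unique positive root of $$\frac{\bar c}{c_B}\Big(\cosh(\sqrt\lambda R)+\sqrt{n_c}\sinh(\sqrt\lambda R)\Big)-\sqrt{n_c}\sinh\big(\sqrt\lambda(1-\alpha)R\big)-\cosh\big(\sqrt\lambda(1-\alpha)R\big)=0,$$ and $R_{vivo}>0$ the unique solution of $$\frac{c_B}{2}\Big(e^{-\alpha\sqrt\lambda R}+\frac{1-\sqrt{n_c}}{1+\sqrt{n_c}}\,e^{(\alpha-2)\sqrt\lambda R}\Big)=\bar c.$$ Let $\sigma_{vitro}=R_{vitro}\big(\sqrt{(g_++g_-)g_-}-g_-\big)$ and $\sigma_{vivo}=R_{vivo}\big(\sqrt{(g_++g_-)g_-}-g_-\big)$. Then $R_{vivo}\le R_{vitro}$ and $\sigma_{vivo}\le\sigma_{vitro}$.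
   Context: These quantities are the front position and velocity of the explicit traveling waves of the Hele-Shaw tumor model with nutrient, in vitro and in vivo respectively, for the piecewise constant choices $\psi(1)=\lambda$, $\psi(n)=\lambda n_c$ for $0<n<1$, $\psi(0)=0$, and $G(c)=g_+$ for $c>\bar c$, $G(c)=-g_-$ for $c<\bar c$. *)

(* Defs.v *)
From Stdlib Require Import Reals Lra.
Open Scope R_scope.

Definition alpha (gp gm : R) : R := sqrt (gm / (gp + gm)).

Definition F_vitro (lam nc gp gm cbar cB x : R) : R :=
  cbar / cB * (cosh (sqrt lam * x) + sqrt nc * sinh (sqrt lam * x))
  - sqrt nc * sinh (sqrt lam * (1 - alpha gp gm) * x)
  - cosh (sqrt lam * (1 - alpha gp gm) * x).

Definition F_vivo (lam nc gp gm cB x : R) : R :=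
  cB / 2 * (exp (- alpha gp gm * sqrt lam * x)
            + (1 - sqrt nc) / (1 + sqrt nc) * exp ((alpha gp gm - 2) * sqrt lam * x)).

Definition sigma_front (gp gm x : R) : R := x * (sqrt ((gp + gm) * gm) - gm).

(* Main.v *)
Require Import Defs.
From Stdlib Require Import Reals Lra Psatz.
Open Scope R_scope.

Lemma cont_vitro lam nc gp gm cbar cB : continuity (fun x => F_vitro lam nc gp gm cbar cB x).
Proof. apply derivable_continuous. unfold F_vitro, cosh, sinh. reg. Qed.

Lemma vitro_exp lam nc gp gm cbar cB x :
  F_vitro lam nc gp gm cbar cB x =
  cbar / cB * ((exp (sqrt lam * x) + / exp (sqrt lam * x)) / 2
     + sqrt nc * ((exp (sqrt lam * x) - / exp (sqrt lam * x)) / 2))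
  - sqrt nc * ((exp (sqrt lam * (1 - alpha gp gm) * x) - / exp (sqrt lam * (1 - alpha gp gm) * x)) / 2)
  - (exp (sqrt lam * (1 - alpha gp gm) * x) + / exp (sqrt lam * (1 - alpha gp gm) * x)) / 2.
Proof. unfold F_vitro, cosh, sinh. rewrite !exp_Ropp. reflexivity. Qed.

Lemma vivo_exp lam nc gp gm cB x :
  F_vivo lam nc gp gm cB x =
  cB / 2 * (exp (sqrt lam * (1 - alpha gp gm) * x) * / exp (sqrt lam * x)
   + (1 - sqrt nc) / (1 + sqrt nc) * (/ exp (sqrt lam * (1 - alpha gp gm) * x) * / exp (sqrt lam * x))).
Proof.
  unfold F_vivo.
  replace (- alpha gp gm * sqrt lam * x) with (sqrt lam * (1 - alpha gp gm) * x + - (sqrt lam * x)) by ring.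
  replace ((alpha gp gm - 2) * sqrt lam * x) with (- (sqrt lam * (1 - alpha gp gm) * x) + - (sqrt lam * x)) by ring.
  rewrite !exp_plus, !exp_Ropp. reflexivity.
Qed.

Theorem mainTheorem6 (lam nc gp gm cbar cB Rvitro Rvivo : R) :
  0 < lam -> 0 < nc -> nc < 1 -> 0 < gp -> 0 < gm ->
  0 < cbar -> cbar < cB / 2 ->
  0 < Rvitro -> F_vitro lam nc gp gm cbar cB Rvitro = 0 ->
  (forall x, 0 < x -> F_vitro lam nc gp gm cbar cB x = 0 -> x = Rvitro) ->
  0 < Rvivo -> F_vivo lam nc gp gm cB Rvivo = cbar ->
  (forall x, 0 < x -> F_vivo lam nc gp gm cB x = cbar -> x = Rvivo) ->
  Rvivo <= Rvitro /\ sigma_front gp gm Rvivo <= sigma_front gp gm Rvitro.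
Proof.
  intros Hl Hn Hn1 Hp Hm Hc HcB Hvt Fvt Uvt Hvv Fvv Uvv.
  assert (HcB0 : 0 < cB) by lra.
  assert (Hs : 0 < sqrt lam) by (apply sqrt_lt_R0; lra).
  assert (Hk : 0 < sqrt nc) by (apply sqrt_lt_R0; lra).
  assert (Hk1 : sqrt nc < 1) by (rewrite <- sqrt_1; apply sqrt_lt_1; lra).
  assert (Ha : 0 < alpha gp gm).
  { unfold alpha. apply sqrt_lt_R0. apply Rdiv_lt_0_compat; lra. }
  assert (Ha1 : alpha gp gm < 1).
  { unfold alpha. rewrite <- sqrt_1. apply sqrt_lt_1.
    - apply Rlt_le, Rdiv_lt_0_compat; lra.
    - lra.
    - apply (Rmult_lt_reg_r (gp + gm)); [lra|]. unfold Rdiv. rewrite Rmult_assoc, Rinv_l; lra. }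
  set (s := sqrt lam) in *. set (k := sqrt nc) in *. set (a := alpha gp gm) in *.
  set (r := cbar / cB).
  assert (Hr : 0 < r) by (apply Rdiv_lt_0_compat; lra).
  assert (Hr2 : r < 1/2).
  { unfold r. apply (Rmult_lt_reg_r cB); [lra|]. unfold Rdiv. rewrite Rmult_assoc, Rinv_l; lra. }
  assert (Neg : F_vitro lam nc gp gm cbar cB Rvivo < 0).
  { rewrite vitro_exp. rewrite vivo_exp in Fvv. fold s k a r in Fvv |- *.
    set (E := exp (s * Rvivo)) in *. set (D := exp (s * (1 - a) * Rvivo)) in *.
    assert (HE : 1 < E).
    { unfold E. rewrite <- exp_0. apply exp_increasing. nra. }
    assert (HD : 0 < D) by apply exp_pos.
    assert (Hrr : r = (D * / E + (1 - k) / (1 + k) * (/ D * / E)) / 2).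
    { unfold r. rewrite <- Fvv. field. split; lra. }
    rewrite Hrr.
    replace ((D * / E + (1 - k) / (1 + k) * (/ D * / E)) / 2 * ((E + / E) / 2 + k * ((E - / E) / 2)) -
      k * ((D - / D) / 2) - (D + / D) / 2)
      with ((1 + k) * (D + (1 - k) / (1 + k) / D) * ((1 - k) / (1 + k) / (E * E) - 1) / 4)
      by (field; repeat split; lra).
    assert (Hq : 0 < (1 - k) / (1 + k) < 1).
    { split. apply Rdiv_lt_0_compat; lra.
      apply (Rmult_lt_reg_r (1 + k)); [lra|]. unfold Rdiv. rewrite Rmult_assoc, Rinv_l; lra. }
    assert (Hq2 : (1 - k) / (1 + k) / (E * E) < 1).
    { apply (Rmult_lt_reg_r (E * E)); [nra|]. unfold Rdiv at 1. rewrite Rmult_assoc, Rinv_l; nra. }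
    assert (0 < D + (1 - k) / (1 + k) / D).
    { assert (0 < (1 - k) / (1 + k) / D) by (apply Rdiv_lt_0_compat; lra). lra. }
    assert (0 < (1 + k) * (D + (1 - k) / (1 + k) / D)) by nra.
    nra. }
  set (X := Rvivo + (ln (2 / r) + 1) / (a * s)).
  assert (HX : Rvivo < X).
  { unfold X. assert (0 < ln (2 / r)).
    { rewrite <- ln_1. apply ln_increasing; [lra|]. apply (Rmult_lt_reg_r r); [lra|].
      unfold Rdiv. rewrite Rmult_assoc, Rinv_l; lra. }
    assert (0 < (ln (2 / r) + 1) / (a * s)) by (apply Rdiv_lt_0_compat; nra). lra. }
  assert (Pos : 0 < F_vitro lam nc gp gm cbar cB X).
  { rewrite vitro_exp. fold s k a r.
    assert (HaX : ln (2 / r) < a * s * X).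
    { unfold X. rewrite Rmult_plus_distr_l.
      replace (a * s * ((ln (2 / r) + 1) / (a * s))) with (ln (2 / r) + 1) by (field; split; lra).
      assert (0 < a * s) by nra. assert (0 < a * s * Rvivo) by nra. lra. }
    assert (Hexp : 2 / r < exp (a * s * X)).
    { rewrite <- (exp_ln (2 / r)) by (apply Rdiv_lt_0_compat; lra). apply exp_increasing; lra. }
    assert (HEsplit : exp (s * X) = exp (s * (1 - a) * X) * exp (a * s * X)).
    { rewrite <- exp_plus. f_equal. ring. }
    rewrite HEsplit.
    set (D := exp (s * (1 - a) * X)) in *. set (G := exp (a * s * X)) in *.
    assert (HD : 1 <= D).
    { unfold D. rewrite <- exp_0 at 1. left. apply exp_increasing.
      assert (0 < X) by lra. assert (0 < 1 - a) by lra. assert (0 < s * (1 - a)) by nra. nra. }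
    assert (HrG : 2 < r * G).
    { apply (Rmult_lt_reg_r (/ r)). apply Rinv_0_lt_compat; lra.
      replace (r * G * / r) with G by (field; lra). exact Hexp. }
    assert (HG : 0 < G) by apply exp_pos.
    set (w := / D). set (e := / (D * G)).
    assert (Hw : D * w = 1) by (unfold w; field; lra).
    assert (He : 0 < e) by (unfold e; apply Rinv_0_lt_compat; nra).
    assert (Hw0 : 0 < w) by (unfold w; apply Rinv_0_lt_compat; lra).
    assert (Hw1 : w <= 1) by nra.
    fold e.
    assert (H1 : 0 < r * (1 - k) * e) by (apply Rmult_lt_0_compat; [nra|lra]).
    assert (H2 : 2 * D < r * (D * G)) by nra.
    nra. }
  destruct (IVT _ _ _ (cont_vitro lam nc gp gm cbar cB) HX Neg Pos) as [z [[Hz1 Hz2] Hz]].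
  assert (Hz0 : 0 < z) by lra.
  pose proof (Uvt z Hz0 Hz) as ->.
  assert (HR : Rvivo <= Rvitro) by lra.
  split; [exact HR|].
  unfold sigma_front. apply Rmult_le_compat_r; [|exact HR].
  assert (gm <= sqrt ((gp + gm) * gm)).
  { rewrite <- (sqrt_square gm) at 1 by lra. apply sqrt_le_1; nra. }
  lra.
Qed.
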